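(* Let $\Lambda$ denote the von Mangoldt function and let $\varepsilon>0$ be a small number. Then, as $x\to\infty$, \[ \sum_{n\leq x}\Lambda([x/n])\Lambda([x/n]+2) = r_2 x + O\left(x^{(2+\varepsilon)/3}\log^2 x\right), \] where the density constant is \[ r_2=\sum_{n\geq 1}\frac{\Lambda(n)\Lambda(n+2)}{n(n+1)}\geq 0.368142813. \]
   Context: $[t]$ denotes the largest integer not exceeding $t$. The von Mangoldt function is $\Lambda(m)=\log p$ if $m=p^k$ for a prime $p$ and an integer $k\geq 1$, and $\Lambda(m)=0$ otherwise. The sum is over positive integers $n\le x$. *)

(* Defs.v *)
From HB Require Import structures.
From mathcomp Require Import all_boot all_order all_algebra.
From mathcomp Require Import all_classical all_reals all_analysis.
Set Implicit Arguments. Unset Strict Implicit. Unset Printing Implicit Defensive.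
Import Order.TTheory GRing.Theory Num.Theory.
Import numFieldNormedType.Exports.
Local Open Scope ring_scope.

(* von Mangoldt function: Lambda m = log p if m = p^k (p prime, k >= 1),
   i.e. m has exactly one prime divisor p; Lambda m = 0 otherwise. *)
Definition vonMangoldt {R : realType} (m : nat) : R :=
  if primes m is [:: p] then ln (p%:R) else 0.

(* [t] = floor t; for t >= 0 this is Num.truncn t. Here t = x/n >= 0. *)
Definition Ssum {R : realType} (x : R) : R :=
  \sum_(1 <= n < (Num.truncn x).+1)
     (vonMangoldt (Num.truncn (x / n%:R)) * vonMangoldt (Num.truncn (x / n%:R)).+2).

Definition r2_term {R : realType} (n : nat) : R :=
  vonMangoldt n * vonMangoldt n.+2 / (n%:R * n.+1%:R).

Definition r2_partial {R : realType} (N : nat) : R := \sum_(1 <= n < N) r2_term n.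

Definition r2 {R : realType} : R := limn (@r2_partial R).

(* Main.v *)
Require Import Defs.
From HB Require Import structures.
From mathcomp Require Import all_boot all_order all_algebra.
From mathcomp Require Import all_classical all_reals all_analysis.
From mathcomp Require Import ring lra zify.
Import Order.TTheory GRing.Theory Num.Theory.
Import numFieldNormedType.Exports.
Local Open Scope ring_scope.


Lemma ln_nat_ge0 (R : realType) (m : nat) : 0 <= ln (m%:R : R).
Proof.
case: m => [|m]; first by rewrite ln0.
by apply: ln_ge0; rewrite ler1n.
Qed.

Lemma ln_nat_le (R : realType) (m k : nat) : (m <= k)%N -> ln (m%:R : R) <= ln k%:R.
Proof.
case: m => [|m] h; first by rewrite ln0 // ln_nat_ge0.
by rewrite ler_ln ?posrE ?ltr0n ?ler_nat //; apply: leq_trans h.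
Qed.

Lemma vm_ge0 (R : realType) (m : nat) : 0 <= (vonMangoldt m : R).
Proof.
rewrite /vonMangoldt; case E: (primes m) => [|p [|q s]] //.
have: p \in primes m by rewrite E mem_head.
rewrite mem_primes => /and3P [pp _ _].
by apply: ln_ge0; rewrite ler1n prime_gt0.
Qed.

Lemma vm_le (R : realType) (m : nat) : (vonMangoldt m : R) <= ln m%:R.
Proof.
rewrite /vonMangoldt; case E: (primes m) => [|p [|q s]]; try exact: ln_nat_ge0.
have: p \in primes m by rewrite E mem_head.
rewrite mem_primes => /and3P [pp m0 pm].
by apply: ln_nat_le; apply: dvdn_leq.
Qed.

Definition ff (R : realType) (m : nat) : R := vonMangoldt m * vonMangoldt m.+2.

Lemma ff_ge0 (R : realType) m : 0 <= ff R m.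
Proof. by apply: mulr_ge0; apply: vm_ge0. Qed.

Lemma ff_le (R : realType) m : ff R m <= ln (m.+2%:R : R) ^+ 2.
Proof.
rewrite expr2 /ff; apply: ler_pM; rewrite ?vm_ge0 //.
  apply: le_trans (vm_le _ m) _; apply: ln_nat_le; by rewrite ltnW.
exact: vm_le.
Qed.

Lemma ln_lb (R : realType) (p : nat) (d : R) (n : nat) :
  0 <= d < 1 -> 1 <= p%:R * (1 - d) ^+ n -> n%:R * d <= ln (p%:R : R).
Proof.
move=> /andP [d0 d1] hp.
have p0 : (0 : R) < p%:R.
  case: p hp => [|p]; first by rewrite mul0r ler10.
  by rewrite ltr0n.
have h1 : expR d * (1 - d) <= 1.
  have := expR_ge1Dx (- d); rewrite expRN => h.
  rewrite -(@ler_pM2r _ (expR d)^-1) ?invr_gt0 ?expR_gt0 // mul1r mulrAC.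
  by rewrite mulfV ?gt_eqF ?expR_gt0 // mul1r.
have h2 : expR (n%:R * d) <= p%:R.
  rewrite expRM_natl.
  apply: (le_trans (y := expR d ^+ n * (p%:R * (1 - d) ^+ n))).
    by rewrite -{1}(mulr1 (expR d ^+ n)) ler_pM2l ?exprn_gt0 ?expR_gt0.
  rewrite mulrCA -exprMn.
  rewrite -{2}(mulr1 p%:R) ler_pM2l //.
  apply: exprn_ile1 => //; apply: mulr_ge0; last by lra.
  exact: ltW (expR_gt0 _).
by rewrite -(expRK (n%:R * d)) ler_ln ?posrE ?expR_gt0.
Qed.



Lemma ln256 (R : realType) : 5 <= ln (256%:R : R).
Proof.
have := @ln_lb R 256 (5/64) 64.
have -> : (64%:R : R) * (5 / 64) = 5 by lra.
apply; lra.
Qed.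

Lemma ln3 (R : realType) : 1 <= ln (3%:R : R).
Proof.
have := @ln_lb R 3 (1/16) 16.
have -> : (16%:R : R) * (1 / 16) = 1 by lra.
apply; lra.
Qed.

Lemma r2_term_ge0 (R : realType) n : 0 <= (r2_term n : R).
Proof.
rewrite /r2_term; apply: divr_ge0; first by apply: mulr_ge0; apply: vm_ge0.
by apply: mulr_ge0; apply: ler0n.
Qed.

Lemma r2_partialS (R : realType) n : (r2_partial n.+1 : R) = r2_partial n + r2_term n.
Proof.
case: n => [|n].
  by rewrite /r2_partial !big_geq // /r2_term /vonMangoldt /= !mul0r add0r.
by rewrite /r2_partial big_nat_recr.
Qed.

Lemma r2_nd (R : realType) : {homo (@r2_partial R) : n m / (n <= m)%N >-> n <= m}.
Proof.
apply/nondecreasing_seqP => n; rewrite r2_partialS lerDl; exact: r2_term_ge0.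
Qed.

Definition TT (R : realType) (m : nat) : R := 2 * ln (m.+2%:R : R) ^+ 2 / m%:R.

Lemma TT_ge0 (R : realType) m : 0 <= TT R m.
Proof.
rewrite /TT; apply: divr_ge0 => //; apply: mulr_ge0 => //; exact: sqr_ge0.
Qed.

Lemma step (R : realType) m : (254 <= m)%N -> (r2_term m : R) <= TT R m - TT R m.+1.
Proof.
move=> hm.
set a := ln (m.+2%:R : R); set b := ln (m.+3%:R : R).
have a5 : 5 <= a by apply: le_trans (ln256 R) _; apply: ln_nat_le; lia.
have M0 : (254%:R : R) <= m%:R by rewrite ler_nat.
have ab : a <= b by apply: ln_nat_le.
have ba : b <= a + 1 / (m.+2%:R).
  have E : (m.+3%:R : R) = m.+2%:R * (1 + 1 / m.+2%:R).
    rewrite mulrDr mulr1 mulrCA divff ?mulr1 //.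
    all: try by rewrite pnatr_eq0.
    by rewrite -natr1.
  have P1 : (1 + 1 / m.+2%:R : R) \is Num.pos.
    by rewrite posrE; apply: addr_gt0 => //; rewrite divr_gt0 ?ltr0n.
  have P2 : (m.+2%:R : R) \is Num.pos by rewrite posrE ltr0n.
  rewrite /b E lnM //.
  rewrite lerD2l; apply: le_ln1Dx.
  by apply: lt_le_trans (_ : (-1 : R) < 0) _ => //; rewrite divr_ge0 ?ler0n.
have fl : ff R m <= a ^+ 2 by apply: ff_le.
have -> : (r2_term m : R) = ff R m / (m%:R * m.+1%:R) by [].
rewrite /TT -/a -/b.
set M := (m%:R : R).
have hM1 : (m.+1%:R : R) = M + 1 by rewrite -natr1.
have hM2 : (m.+2%:R : R) = M + 2 by rewrite -natr1 hM1; ring.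
rewrite hM2 in ba; rewrite hM1.
set e := b - a.
have e0 : 0 <= e by rewrite subr_ge0.
have e1 : e * (M + 2) <= 1.
  rewrite -(@ler_pM2r _ (M + 2)^-1) ?invr_gt0; last lra.
  rewrite -mulrA divff ?mulr1 ?mul1r; last lra.
  rewrite /e; lra.
have Me : M * e <= 1 by nra.
have ee : e <= 1 by nra.
have key : 0 <= 2 * (M + 1) * a ^+ 2 - 2 * M * b ^+ 2 - a ^+ 2.
  have -> : b = a + e by rewrite /e; ring.
  have h1 : 4 * M * a * e <= 4 * a by nra.
  have h2 : 2 * M * e * e <= 2 by nra.
  nra.
apply: (le_trans (y := a ^+ 2 / (M * (M + 1)))).
  by apply: ler_pM => //; [exact: ff_ge0| rewrite invr_ge0; nra].
rewrite -subr_ge0.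
have -> : 2 * a ^+ 2 / M - 2 * b ^+ 2 / (M + 1) - a ^+ 2 / (M * (M + 1)) =
  (2 * (M + 1) * a ^+ 2 - 2 * M * b ^+ 2 - a ^+ 2) / (M * (M + 1)).
  by field; lra.
by apply: divr_ge0 => //; nra.
Qed.

Lemma tail (R : realType) K j : (254 <= K)%N ->
  (r2_partial (K + j) : R) <= r2_partial K + TT R K - TT R (K + j).
Proof.
move=> hK; elim: j => [|j IH]; first by rewrite addn0 addrK.
rewrite addnS r2_partialS.
have h := @step R (K + j) (leq_trans hK (leq_addr j K)).
lra.
Qed.

Lemma r2_bound (R : realType) K n : (254 <= K)%N ->
  (r2_partial n : R) <= r2_partial K + TT R K.
Proof.
move=> hK; case: (leqP n K) => h.
  apply: (le_trans (y := r2_partial K)); first exact: r2_nd.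
  by rewrite lerDl TT_ge0.
have -> : n = (K + (n - K))%N by lia.
apply: le_trans (@tail R K (n - K) hK) _.
by rewrite lerBlDr lerDl TT_ge0.
Qed.

Lemma r2_cvg (R : realType) : cvgn (@r2_partial R).
Proof.
apply: nondecreasing_is_cvgn; first exact: r2_nd.
exists (r2_partial 254 + TT R 254) => _ [n _ <-].
exact: r2_bound.
Qed.

Lemma r2_ge (R : realType) n : (r2_partial n : R) <= r2.
Proof. exact: nondecreasing_cvgn_le (r2_nd R) (r2_cvg R) n. Qed.

Lemma r2_le (R : realType) K : (254 <= K)%N -> (r2 : R) <= r2_partial K + TT R K.
Proof.
move=> hK; apply: limr_le; first exact: r2_cvg.
by apply: nearW => n; apply: r2_bound.
Qed.


Lemma vmpk (R : realType) m p : primes m = [:: p] -> (vonMangoldt m : R) = ln p%:R.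
Proof. by rewrite /vonMangoldt => ->. Qed.

Lemma vm0 (R : realType) m : size (primes m) != 1%N -> (vonMangoldt m : R) = 0.
Proof. by rewrite /vonMangoldt; case: (primes m) => [|p [|q s]]. Qed.

Lemma part3 (R : realType) : 368142813%:R / (10 ^+ 9) <= (r2 : R).
Proof.
apply: le_trans (r2_ge R 12).
have l2 : 672/1000 <= ln (2%:R : R).
  have := @ln_lb R 2 (21/500) 16; rewrite (_ : 16%:R * _ = 672/1000); last lra.
  apply; lra.
have l3 : 1056/1000 <= ln (3%:R : R).
  have := @ln_lb R 3 (33/500) 16; rewrite (_ : 16%:R * _ = 1056/1000); last lra.
  apply; lra.
have l5 : 152/100 <= ln (5%:R : R).
  have := @ln_lb R 5 (19/200) 16; rewrite (_ : 16%:R * _ = 152/100); last lra.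
  apply; lra.
have l7 : 1824/1000 <= ln (7%:R : R).
  have := @ln_lb R 7 (57/500) 16; rewrite (_ : 16%:R * _ = 1824/1000); last lra.
  apply; lra.
have l11 : 2224/1000 <= ln (11%:R : R).
  have := @ln_lb R 11 (139/1000) 16; rewrite (_ : 16%:R * _ = 2224/1000); last lra.
  apply; lra.
have l13 : 2368/1000 <= ln (13%:R : R).
  have := @ln_lb R 13 (37/250) 16; rewrite (_ : 16%:R * _ = 2368/1000); last lra.
  apply; lra.
rewrite /r2_partial /r2_term.
do 11 rewrite big_ltn //.
rewrite big_geq //.
rewrite (@vm0 R 1) // (@vm0 R 6) // (@vm0 R 10) // (@vm0 R 12) //.
rewrite (@vmpk R 2 2) // (@vmpk R 3 3) // (@vmpk R 4 2) // (@vmpk R 5 5) //.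
rewrite (@vmpk R 7 7) // (@vmpk R 8 2) // (@vmpk R 9 3) // (@vmpk R 11 11) //.
rewrite (@vmpk R 13 13) //.
have g2 := ln_nat_ge0 R 2; have g3 := ln_nat_ge0 R 3; have g5 := ln_nat_ge0 R 5.
have g7 := ln_nat_ge0 R 7; have g11 := ln_nat_ge0 R 11; have g13 := ln_nat_ge0 R 13.
rewrite !mul0r !mulr0 !mul0r !add0r !addr0.
have t1 := ler_pM (_ : 0 <= 672/1000) (_ : 0 <= 672/1000) l2 l2.
have t2 := ler_pM (_ : 0 <= 1056/1000) (_ : 0 <= 152/100) l3 l5.
have t3 := ler_pM (_ : 0 <= 152/100) (_ : 0 <= 1824/1000) l5 l7.
have t4 := ler_pM (_ : 0 <= 1824/1000) (_ : 0 <= 1056/1000) l7 l3.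
have t5 := ler_pM (_ : 0 <= 1056/1000) (_ : 0 <= 2224/1000) l3 l11.
have t6 := ler_pM (_ : 0 <= 2224/1000) (_ : 0 <= 2368/1000) l11 l13.
lra.
Qed.


Lemma trunc_div (R : realType) (x : R) n : 0 <= x -> (0 < n)%N ->
  Num.truncn (x / n%:R) = (divn (Num.truncn x) n)%N.
Proof.
move=> x0 n0; set N := Num.truncn x.
have /andP [h1 h2] := truncn_itv x0.
have n0' : (0 : R) < n%:R by rewrite ltr0n.
apply: truncn_def; apply/andP; split.
  rewrite ler_pdivlMr // -natrM.
  apply: le_trans h1; rewrite ler_nat; exact: leq_trunc_div.
rewrite ltr_pdivrMr // -natrM.
apply: lt_le_trans h2 _; rewrite ler_nat; exact: ltn_ceil.
Qed.

Lemma count_le (K b : nat) : (\sum_(1 <= n < K) (n <= b : nat) = minn b K.-1)%N.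
Proof.
elim: K => [|K IH]; first by rewrite big_geq // minn0.
case: K IH => [|K] IH; first by rewrite big_geq // minn0.
rewrite big_nat_recr //= IH /=.
case: (leqP K.+1 b) => h /=; lia.
Qed.

Lemma indic (N n m : nat) : (0 < n)%N -> (0 < m)%N ->
  ((divn N n) == m) = (n <= (divn N m))%N && ~~ (n <= (divn N m.+1))%N.
Proof.
move=> n0 m0; rewrite eqn_leq andbC [((divn N n) <= m)%N]leqNgt !leq_divRL //.
by rewrite (mulnC n m) (mulnC n m.+1).
Qed.

Lemma ident (R : realType) (g : nat -> R) (N : nat) :
  \sum_(1 <= n < N.+1) g ((divn N n))%N =
  \sum_(1 <= m < N.+1) g m * (((divn N m))%:R - ((divn N m.+1))%:R).
Proof.
transitivity (\sum_(1 <= n < N.+1) \sum_(1 <= m < N.+1) ((divn N n) == m)%:R * g m).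
  apply: eq_big_nat => n /andP [n1 nN].
  rewrite (bigD1_seq ((divn N n))%N) /=; last exact: iota_uniq.
    rewrite eqxx mul1r big1 ?addr0 // => m; rewrite eq_sym => /negbTE ->.
    by rewrite mul0r.
  rewrite mem_index_iota divn_gt0 // ltnS leq_div andbT.
  by rewrite -ltnS.
rewrite exchange_big /=.
apply: eq_big_nat => m /andP [m1 mN].
rewrite -mulr_suml mulrC; congr (_ * _).
transitivity (\sum_(1 <= n < N.+1) (((n <= (divn N m))%N : nat)%:R - ((n <= (divn N m.+1))%N : nat)%:R : R)).
  apply: eq_big_nat => n /andP [n1 nN].
  rewrite indic //.
  case: (leqP n ((divn N m.+1))) => h1 /=.
    have -> : (n <= (divn N m))%N by apply: leq_trans h1 _; apply: leq_div2l.
    by rewrite subrr.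
  by case: (n <= (divn N m))%N; rewrite ?subr0.
rewrite sumrB -!natr_sum !count_le /=.
have h1 : ((divn N m) <= N)%N by apply: leq_div.
have h2 : ((divn N m.+1) <= N)%N by apply: leq_div.
by rewrite (minn_idPl h1) (minn_idPl h2).
Qed.

Lemma floor_b (R : realType) (N k : nat) : (0 < k)%N ->
  ((N%:R / k%:R - 1 : R) <= (divn N k)%:R) && ((divn N k)%:R <= (N%:R / k%:R : R)).
Proof.
move=> k0; have k0' : (0 : R) < k%:R by rewrite ltr0n.
apply/andP; split.
  rewrite lerBlDr ler_pdivrMr // natr1 -natrM ler_nat.
  apply: ltnW; exact: ltn_ceil.
by rewrite ler_pdivlMr // -natrM ler_nat leq_trunc_div.
Qed.


Lemma main_est (R : realType) (x : R) : 256 * 256 <= x ->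
  `|Ssum x - r2 * x| <= (16 + r2) * (Num.sqrt x * ln x ^+ 2).
Proof.
move=> hx.
have x0 : 0 <= x by lra.
set N := Num.truncn x.
have /andP [hN1 hN2] := truncn_itv x0.
rewrite -/N in hN1 hN2.
have SE : Ssum x = \sum_(1 <= n < N.+1) ff R (divn N n).
  rewrite /Ssum; apply: eq_big_nat => n /andP [n1 _].
  by rewrite trunc_div.
rewrite SE ident.
set s := Num.sqrt x.
have s0 : 0 <= s := sqrtr_ge0 x.
have ss : s * s = x by rewrite -expr2 sqr_sqrtr.
have s256 : 256 <= s by nra.
set Y := Num.truncn s.
have /andP [hY1 hY2] := truncn_itv s0.
rewrite -/Y in hY1 hY2.
have Y256 : (256 <= Y)%N by rewrite truncn_ge_nat //; lra.
have YN : (Y.+1 <= N)%N.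
  rewrite truncn_ge_nat // -natr1; nra.
rewrite (big_cat_nat _ (n := Y.+1)) //=; last by apply: leq_trans YN _.
set c := fun m : nat => ((divn N m)%:R - (divn N m.+1)%:R : R).
set A := \sum_(1 <= m < Y.+1) _.
set B := \sum_(Y.+1 <= m < N.+1) _.
set L := ln (x + 2) ^+ 2.
have L0 : 0 <= L := sqr_ge0 _.
have lnm : forall m, (m <= N)%N -> ln (m.+2%:R : R) <= ln (x + 2).
  move=> m hm.
  have e : (m.+2%:R : R) = m%:R + 2 by rewrite -addn2 natrD.
  have : (m%:R : R) <= N%:R by rewrite ler_nat.
  rewrite ler_ln ?posrE ?ltr0n //; lra.
have ffL : forall m, (m <= N)%N -> ff R m <= L.
  move=> m hm; apply: le_trans (ff_le R m) _; rewrite /L !expr2.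
  by apply: ler_pM; rewrite ?ln_nat_ge0 ?lnm.
set P := r2_partial Y.+1 : R.
have E1 : `|A - N%:R * P| <= Y%:R * L.
  have -> : A - N%:R * P = \sum_(1 <= m < Y.+1) ff R m * (c m - N%:R / (m%:R * m.+1%:R)).
    rewrite /A /P /r2_partial mulr_sumr -sumrB; apply: eq_big_nat => m _.
    rewrite /r2_term /ff [in RHS]mulrBr; congr (_ - _).
    by rewrite mulrCA.
  apply: le_trans (ler_norm_sum _ _ _) _.
  apply: (le_trans (y := \sum_(1 <= m < Y.+1) L)).
    apply: ler_sum_nat => m /andP [m1 mY].
    rewrite normrM ger0_norm ?ff_ge0 //.
    have hc : `|c m - N%:R / (m%:R * m.+1%:R)| <= 1.
      have m0 : (0 < m)%N by [].
      have /andP [a1 a2] := @floor_b R N m m0.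
      have /andP [b1 b2] := @floor_b R N m.+1 (ltn0Sn m).
      have E : (N%:R / (m%:R * m.+1%:R) : R) = N%:R / m%:R - N%:R / m.+1%:R.
        have m0' : (m%:R : R) != 0 by rewrite pnatr_eq0 -lt0n.
        have m1' : (m.+1%:R : R) != 0 by rewrite pnatr_eq0.
        rewrite -natr1 in m1' *; field; by rewrite m0' m1'.
      rewrite E /c /= ler_norml.
      move: a1 a2 b1 b2; clear.
      move: (N%:R / m%:R) (N%:R / m.+1%:R) ((N %/ m)%:R) ((N %/ m.+1)%:R) => a b u v.
      move=> *; apply/andP; split; lra.
    rewrite -[L]mulr1; apply: ler_pM; rewrite ?ff_ge0 ?normr_ge0 //.
    apply: ffL; apply: leq_trans (ltnW YN); by rewrite -ltnS.
  by rewrite sumr_const_nat subn1 /= mulr_natl.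
have Y0 : (0 < Y.+1)%N by [].
have /andP [q1 q2] := @floor_b R N Y.+1 Y0.
set D := (N%:R / Y.+1%:R : R).
rewrite -/D in q1 q2.
have Ds : D <= s.
  rewrite /D ler_pdivrMr ?ltr0n //; nra.
have D0 : 0 <= D by rewrite /D divr_ge0 ?ler0n.
have cge0 : forall m, (0 < m)%N -> 0 <= c m.
  move=> m m0; rewrite /c subr_ge0 ler_nat; exact: leq_div2l.
have B0 : 0 <= B.
  apply: (le_trans (y := \sum_(Y.+1 <= m < N.+1) (0:R))); first by rewrite big1.
  apply: ler_sum_nat => m /andP [m1 mN].
  by apply: mulr_ge0; [exact: ff_ge0 | apply: cge0; apply: leq_trans m1].
have B1 : B <= L * (divn N Y.+1)%:R.
  apply: (le_trans (y := \sum_(Y.+1 <= m < N.+1) L * c m)).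
    apply: ler_sum_nat => m /andP [m1 mN].
    apply: ler_wpM2r; first by apply: cge0; apply: leq_trans m1.
    by apply: ffL; rewrite -ltnS.
  rewrite -mulr_sumr; apply: ler_wpM2l => //.
  have -> : \sum_(Y.+1 <= m < N.+1) c m =
      - \sum_(Y.+1 <= m < N.+1) ((divn N m.+1)%:R - (divn N m)%:R : R).
    by rewrite -sumrN; apply: eq_bigr => m _; rewrite opprB.
  rewrite telescope_sumr; last by apply: leq_trans (ltnW YN) _.
  by rewrite opprB lerBlDr lerDl ler0n.
have r2P1 : P <= r2 by apply: r2_ge.
have r2P2 : r2 <= P + TT R Y.+1 by apply: r2_le; apply: (@leq_trans 256) => //; exact: leqW Y256.
have TTb : N%:R * TT R Y.+1 <= 2 * L * D.
  rewrite /TT /D.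
  have hl : ln ((Y.+1).+2%:R : R) ^+ 2 <= L.
    rewrite /L !expr2; apply: ler_pM; rewrite ?ln_nat_ge0 ?lnm //.
  have -> : N%:R * (2 * ln ((Y.+1).+2%:R : R) ^+ 2 / Y.+1%:R) =
     2 * ln ((Y.+1).+2%:R : R) ^+ 2 * (N%:R / Y.+1%:R) by rewrite mulrCA !mulrA.
  apply: ler_wpM2r => //; lra.
have lx1 : 1 <= ln x.
  apply: le_trans (ln3 R) _; rewrite ler_ln ?posrE ?ltr0n //; lra.
have Lb : L <= 4 * ln x ^+ 2.
  have xp : 0 < x by lra.
  have x2p : 0 < x + 2 by lra.
  have h1 : ln (x + 2) <= ln x + ln x.
    rewrite -lnM ?posrE //.
    rewrite ler_ln ?posrE ?mulr_gt0 //.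
    nra.
  have h2 : 0 <= ln (x + 2) by apply: ln_ge0; lra.
  rewrite /L; nra.
have sl : 1 <= s * ln x ^+ 2 by nra.
have r20 : 0 <= (r2 : R).
  apply: le_trans (r2_ge R 0); by rewrite /r2_partial big_geq.
have f1 : Y%:R * L <= s * L by apply: ler_wpM2r.
have f2 : L * (divn N Y.+1)%:R <= L * s by apply: ler_wpM2l => //; lra.
have f3 : 2 * L * D <= 2 * L * s by apply: ler_wpM2l => //; lra.
have f4 : 0 <= r2 * (x - N%:R) <= r2.
  apply/andP; split; first by apply: mulr_ge0 => //; lra.
  rewrite -[X in _ <= X]mulr1; apply: ler_wpM2l => //; lra.
have f5 : 0 <= N%:R * (r2 - P) <= N%:R * TT R Y.+1.
  apply/andP; split; first by apply: mulr_ge0; rewrite ?ler0n // subr_ge0.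
  by apply: ler_wpM2l; rewrite ?ler0n // lerBlDl.
have f6 : 4 * L * s <= 16 * ln x ^+ 2 * s.
  apply: ler_wpM2r; first exact: s0.
  lra.
have f7 : r2 <= r2 * (s * ln x ^+ 2) by rewrite -[X in X <= _]mulr1; apply: ler_wpM2l.
have E : A + B - r2 * x = (A - N%:R * P) + B - N%:R * (r2 - P) - r2 * (x - N%:R) by ring.
rewrite E.
move: E1 f1 f2 f3 f4 f5 f6 f7 TTb B0 B1.
set AA := A - N%:R * P.
move=> E1 f1 f2 f3 /andP [f41 f42] /andP [f51 f52] f6 f7 TTb B0 B1.
have Ls0 : 0 <= L * s by apply: mulr_ge0.
rewrite ler_norml; apply/andP; split.
  move: E1; rewrite ler_norml => /andP [e1 e2]; lra.
move: E1; rewrite ler_norml => /andP [e1 e2]; lra.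
Qed.


Theorem theorem10p2 (R : realType) :
  cvgn (@r2_partial R) /\
  (forall eps : R, 0 < eps ->
     exists C : R, exists x0 : R, forall x : R, x0 <= x ->
       `| Ssum x - r2 * x | <= C * (x `^ ((2 + eps) / 3) * (ln x) ^+ 2)) /\
  (368142813%:R / (10 ^+ 9) <= (r2 : R)).
Proof.
split; first exact: r2_cvg.
split; last exact: part3.
move=> eps eps0.
have r20 : 0 <= (r2 : R).
  apply: le_trans (r2_ge R 0); by rewrite /r2_partial big_geq.
exists (16 + r2), (256 * 256) => x hx.
apply: le_trans (@main_est R x hx) _.
apply: ler_wpM2l; first lra.
apply: ler_wpM2r; first exact: sqr_ge0.
rewrite -powR12_sqrt; last lra.
apply: ler_powR; lra.
Qed.
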